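(* Let $F$ be a commutative field, $n\ge 3$, and let $K$ be a linear complex of planes in $\mathrm{PG}(n,F)$ having no singular line. Then $n$ is even. Moreover, for each hyperplane $H$ of $\mathrm{PG}(n,F)$, the set $\mathcal F_H$ of all lines whose polar hyperplane (with respect to $K$) is $H$ is a line spread of $H$.
   Context: A linear complex of planes of $\mathrm{PG}(n,F)$ is the set of planes whose Plücker image ($F(v_0\wedge v_1\wedge v_2)$ for a basis $v_0,v_1,v_2$ of the corresponding 3-dimensional subspace of $F^{n+1}$) lies in a fixed hyperplane of $\mathbb P(\bigwedge^{3}F^{n+1})$. A line $\ell$ is singular for $K$ if every plane through $\ell$ belongs to $K$; for a non-singular line $\ell$ there is a unique hyperplane $E$ (the polar hyperplane of $\ell$) such that a plane through $\ell$ belongs to $K$ iff it is contained in $E$. A line spread of a projective space is a set of lines such that each point lies on exactly one of them. *)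

(* Defs.v *)
(* Projective space PG(m-1,F) is modelled by F^m = 'rV[F]_m;
   a projective subspace of projective dimension d is the row space of a
   square matrix P : 'M[F]_m with \rank P = d+1 (mxalgebra). *)
From HB Require Import structures.
From mathcomp Require Import all_boot all_order all_algebra.
Set Implicit Arguments. Unset Strict Implicit. Unset Printing Implicit Defensive.
Import GRing.Theory.
Local Open Scope ring_scope.

Definition plucker (F : fieldType) (m : nat) (A : 'M[F]_(3, m)) (i j k : 'I_m) : F :=
  \det (colsub (fun s : 'I_3 => if val s == 0%N then i
                               else if val s == 1%N then j else k) A).

(* A hyperplane of P(wedge^3 F^m) is given (up to scalar) by a nonzero
   coefficient vector c_{ijk}, i<j<k, w.r.t. the standard basis e_i^e_j^e_k. *)
Definition complex_coeff (F : fieldType) (m : nat) (c : 'I_m -> 'I_m -> 'I_m -> F) : Prop :=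
  exists i j k : 'I_m, (i < j < k)%N /\ c i j k != 0.

Definition in_complex (F : fieldType) (m : nat) (c : 'I_m -> 'I_m -> 'I_m -> F)
  (P : 'M[F]_m) : Prop :=
  \rank P = 3%N /\
  exists A : 'M[F]_(3, m), [/\ (A == P)%MS, row_free A &
    \sum_(i < m) \sum_(j < m) \sum_(k < m | (i < j < k)%N) c i j k * plucker A i j k = 0].

Definition singular_line (F : fieldType) (m : nat) (c : 'I_m -> 'I_m -> 'I_m -> F)
  (l : 'M[F]_m) : Prop :=
  \rank l = 2%N /\
  forall P : 'M[F]_m, \rank P = 3%N -> (l <= P)%MS -> in_complex c P.

Definition is_polar (F : fieldType) (m : nat) (c : 'I_m -> 'I_m -> 'I_m -> F)
  (l E : 'M[F]_m) : Prop :=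
  \rank E = m.-1 /\
  forall P : 'M[F]_m, \rank P = 3%N -> (l <= P)%MS -> (in_complex c P <-> (P <= E)%MS).

Definition line_spread (F : fieldType) (m : nat) (S : 'M[F]_m -> Prop) (H : 'M[F]_m) : Prop :=
  [/\ (forall l, S l -> \rank l = 2%N /\ (l <= H)%MS),
      (forall p : 'M[F]_m, \rank p = 1%N -> (p <= H)%MS -> exists l, S l /\ (p <= l)%MS) &
      (forall p l1 l2 : 'M[F]_m, \rank p = 1%N -> S l1 -> S l2 ->
          (p <= l1)%MS -> (p <= l2)%MS -> (l1 == l2)%MS)].

(* Main.v *)
Require Import Defs.
From mathcomp Require Import all_boot all_order all_algebra ring zify.
From Stdlib Require Import Classical.
Set Implicit Arguments. Unset Strict Implicit. Unset Printing Implicit Defensive.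
Import GRing.Theory.
Local Open Scope ring_scope.

Definition rows3 (F : fieldType) (m : nat) (a b x : 'rV[F]_m) : 'M[F]_(3, m) :=
  \matrix_(r < 3, j < m) (if val r == 0%N then a 0 j else if val r == 1%N then b 0 j else x 0 j).

Lemma plucker3 (F : fieldType) (m : nat) (a b x : 'rV[F]_m) i j k :
  plucker (rows3 a b x) i j k =
  a 0 i * (b 0 j * x 0 k - b 0 k * x 0 j) - a 0 j * (b 0 i * x 0 k - b 0 k * x 0 i)
  + a 0 k * (b 0 i * x 0 j - b 0 j * x 0 i).
Proof.
rewrite /plucker (expand_det_row _ 0) !big_ord_recl big_ord0 /cofactor.
rewrite !(expand_det_row _ 0) !big_ord_recl !big_ord0 /cofactor.
rewrite !det_mx11 !mxE /=. ring.
Qed.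

Definition Omega (F : fieldType) (m : nat) (c : 'I_m -> 'I_m -> 'I_m -> F) (A : 'M[F]_(3, m)) :=
  \sum_(i < m) \sum_(j < m) \sum_(k < m | (i < j < k)%N) c i j k * plucker A i j k.

Definition tri (F : fieldType) (m : nat) (c : 'I_m -> 'I_m -> 'I_m -> F) (a b x : 'rV[F]_m) :=
  Omega c (rows3 a b x).

Lemma OmegaM (F : fieldType) (m : nat) (c : 'I_m -> 'I_m -> 'I_m -> F) (M : 'M[F]_3) (A : 'M[F]_(3, m)) :
  Omega c (M *m A) = \det M * Omega c A.
Proof.
rewrite /Omega big_distrr; apply: eq_bigr => i _.
rewrite big_distrr; apply: eq_bigr => j _.
rewrite big_distrr; apply: eq_bigr => k _.
rewrite /plucker.
have cM : forall f : 'I_3 -> 'I_m, colsub f (M *m A) = M *m colsub f A.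
  by move=> f; apply/matrixP => p q; rewrite !mxE; apply: eq_bigr => r _; rewrite !mxE.
by rewrite cM det_mulmx mulrCA.
Qed.


Lemma triDr (F : fieldType) (m : nat) (c : 'I_m -> 'I_m -> 'I_m -> F) a b x y :
  tri c a b (x + y) = tri c a b x + tri c a b y.
Proof.
rewrite /tri /Omega -big_split; apply: eq_bigr => i _.
rewrite -big_split; apply: eq_bigr => j _.
rewrite -big_split; apply: eq_bigr => k _.
rewrite /= !plucker3 !mxE; ring.
Qed.

Lemma triZr (F : fieldType) (m : nat) (c : 'I_m -> 'I_m -> 'I_m -> F) a b k x :
  tri c a b (k *: x) = k * tri c a b x.
Proof.
rewrite /tri /Omega big_distrr; apply: eq_bigr => i _.
rewrite big_distrr; apply: eq_bigr => j _.
rewrite big_distrr; apply: eq_bigr => l _.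
rewrite /= !plucker3 !mxE; ring.
Qed.

Lemma triDm (F : fieldType) (m : nat) (c : 'I_m -> 'I_m -> 'I_m -> F) a b x y :
  tri c a (x + y) b = tri c a x b + tri c a y b.
Proof.
rewrite /tri /Omega -big_split; apply: eq_bigr => i _.
rewrite -big_split; apply: eq_bigr => j _.
rewrite -big_split; apply: eq_bigr => k _.
rewrite /= !plucker3 !mxE; ring.
Qed.

Lemma triZm (F : fieldType) (m : nat) (c : 'I_m -> 'I_m -> 'I_m -> F) a b k x :
  tri c a (k *: x) b = k * tri c a x b.
Proof.
rewrite /tri /Omega big_distrr; apply: eq_bigr => i _.
rewrite big_distrr; apply: eq_bigr => j _.
rewrite big_distrr; apply: eq_bigr => l _.
rewrite /= !plucker3 !mxE; ring.
Qed.

Lemma tri_xx (F : fieldType) (m : nat) (c : 'I_m -> 'I_m -> 'I_m -> F) a x :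
  tri c a x x = 0.
Proof.
rewrite /tri /Omega big1 // => i _; rewrite big1 // => j _; rewrite big1 // => k _.
rewrite !plucker3; ring.
Qed.

Lemma tri_aa (F : fieldType) (m : nat) (c : 'I_m -> 'I_m -> 'I_m -> F) a x :
  tri c a a x = 0.
Proof.
rewrite /tri /Omega big1 // => i _; rewrite big1 // => j _; rewrite big1 // => k _.
rewrite !plucker3; ring.
Qed.

Lemma lin_expand (F : fieldType) (m : nat) (f : 'rV[F]_m -> F) :
  (forall x y, f (x + y) = f x + f y) -> (forall k x, f (k *: x) = k * f x) ->
  forall x, f x = \sum_q x 0 q * f (delta_mx 0 q).
Proof.
move=> fD fZ x.
have f0 : f 0 = 0 by rewrite -(scale0r 0) fZ mul0r.
rewrite {1}(row_sum_delta x) (big_morph f fD f0).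
by apply: eq_bigr => q _; rewrite fZ.
Qed.

Definition Gm (F : fieldType) (m : nat) (c : 'I_m -> 'I_m -> 'I_m -> F) (a : 'rV[F]_m) : 'M[F]_m :=
  \matrix_(p, q) tri c a (delta_mx 0 p) (delta_mx 0 q).

Lemma triG (F : fieldType) (m : nat) (c : 'I_m -> 'I_m -> 'I_m -> F) a y x :
  tri c a y x = (y *m Gm c a *m x^T) 0 0.
Proof.
rewrite (lin_expand (triDr c a y) (triZr c a y)).
rewrite !mxE; apply: eq_bigr => q _.
rewrite !mxE mulrC; congr (_ * _).
rewrite (lin_expand (f := fun y => tri c a y (delta_mx 0 q)) (fun z w => triDm c a (delta_mx 0 q) z w) (fun k z => triZm c a (delta_mx 0 q) k z)) /=.
by apply: eq_bigr => p _; rewrite !mxE.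
Qed.
Definition beta (F : fieldType) (m : nat) (G : 'M[F]_m) (y x : 'rV[F]_m) : F :=
  (y *m G *m x^T) 0 0.

Lemma betaDl (F : fieldType) (m : nat) (G : 'M[F]_m) x y z :
  beta G (x + y) z = beta G x z + beta G y z.
Proof. by rewrite /beta !mulmxDl mxE. Qed.
Lemma betaZl (F : fieldType) (m : nat) (G : 'M[F]_m) k x z :
  beta G (k *: x) z = k * beta G x z.
Proof. by rewrite /beta -!scalemxAl mxE. Qed.
Lemma betaDr (F : fieldType) (m : nat) (G : 'M[F]_m) x y z :
  beta G z (x + y) = beta G z x + beta G z y.
Proof. by rewrite /beta linearD /= mulmxDr mxE. Qed.
Lemma betaZr (F : fieldType) (m : nat) (G : 'M[F]_m) k x z :
  beta G z (k *: x) = k * beta G z x.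
Proof. by rewrite /beta linearZ /= -scalemxAr mxE. Qed.
Lemma betaNl (F : fieldType) (m : nat) (G : 'M[F]_m) x z :
  beta G (- x) z = - beta G x z.
Proof. by rewrite -scaleN1r betaZl mulN1r. Qed.
Lemma betaNr (F : fieldType) (m : nat) (G : 'M[F]_m) x z :
  beta G z (- x) = - beta G z x.
Proof. by rewrite -scaleN1r betaZr mulN1r. Qed.

Lemma beta_skew (F : fieldType) (m : nat) (G : 'M[F]_m) :
  (forall x, beta G x x = 0) -> forall x y, beta G x y = - beta G y x.
Proof.
move=> alt x y; have := alt (x + y).
rewrite betaDl !betaDr !alt add0r addr0 => /eqP; rewrite addr_eq0 => /eqP //.
Qed.

Definition orth (F : fieldType) (m p : nat) (G : 'M[F]_m) (x : 'rV[F]_m) (U : 'M[F]_(p, m)) :=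
  x *m G *m U^T == 0.

Lemma orth1 (F : fieldType) (m : nat) (G : 'M[F]_m) x u : orth G x u = (beta G x u == 0).
Proof.
rewrite /orth /beta; apply/eqP/eqP => [->|H]; first by rewrite mxE.
by apply/matrixP => i j; rewrite !ord1 H mxE.
Qed.

Lemma orth_sub (F : fieldType) (m p q : nat) (G : 'M[F]_m) x (U : 'M[F]_(p, m)) (V : 'M[F]_(q, m)) :
  orth G x U -> (V <= U)%MS -> orth G x V.
Proof.
move=> H /submxP [D ->]; rewrite /orth trmx_mul mulmxA (eqP H) mul0mx //.
Qed.

Lemma orth_col (F : fieldType) (m p q : nat) (G : 'M[F]_m) x (A : 'M[F]_(p, m)) (B : 'M[F]_(q, m)) :
  orth G x (col_mx A B) = orth G x A && orth G x B.
Proof. by rewrite /orth tr_col_mx mul_mx_row row_mx_eq0. Qed.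

Lemma orth_adds (F : fieldType) (m p q : nat) (G : 'M[F]_m) x (A : 'M[F]_(p, m)) (B : 'M[F]_(q, m)) :
  orth G x A -> orth G x B -> orth G x (A + B)%MS.
Proof.
move=> hA hB; apply: (@orth_sub _ _ _ _ _ _ (col_mx A B)); first by rewrite orth_col hA.
by rewrite addsmxE.
Qed.

Lemma rank_add1 (F : fieldType) (m p : nat) (A : 'M[F]_(p, m)) (x : 'rV[F]_m) :
  ~~ (x <= A)%MS -> \rank (A + x)%MS = (\rank A).+1.
Proof.
move=> nxA; apply/eqP; rewrite eqn_leq; apply/andP; split.
  apply: leq_trans (mxrank_adds_leqif A x).1 _.
  by rewrite -(addn1 (\rank A)) leq_add2l rank_leq_row.
by rewrite (ltn_leqif (mxrank_leqif_sup (addsmxSl A x))) addsmx_sub submx_refl.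
Qed.

Lemma beta_entry (F : fieldType) (m p q : nat) (G : 'M[F]_m) (W : 'M[F]_(p, m)) (W' : 'M[F]_(q, m)) i j :
  (W *m G *m W'^T) i j = beta G (row i W) (row j W').
Proof.
rewrite /beta !mxE; apply: eq_bigr => k _; rewrite !mxE; congr (_ * _).
by apply: eq_bigr => l _; rewrite !mxE.
Qed.

Lemma beta0l (F : fieldType) (m : nat) (G : 'M[F]_m) x : beta G 0 x = 0.
Proof. by rewrite /beta !mul0mx mxE. Qed.

Lemma step_lemma (F : fieldType) (m : nat) (G : 'M[F]_m) :
  (forall x, beta G x x = 0) -> forall W : 'M[F]_m, W *m G *m W^T != 0 ->
  exists W' : 'M[F]_m, [/\ (W' <= W)%MS, (\rank W' + 2 = \rank W)%N &
     forall w, (w <= W')%MS -> orth G w W' -> orth G w W].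
Proof.
move=> alt W HW.
have: [exists i, exists j, (W *m G *m W^T) i j != 0].
  apply: contraR HW => /existsPn H; apply/eqP/matrixP => i j.
  by move/existsPn: (H i) => /(_ j); rewrite negbK => /eqP ->; rewrite mxE.
case/existsP => i /existsP [j]; rewrite beta_entry.
set u := row i W; set d := beta G u (row j W) => dn0.
set v := d^-1 *: row j W.
have uW : (u <= W)%MS by apply: row_sub.
have vW : (v <= W)%MS by apply: scalemx_sub; apply: row_sub.
have buv : beta G u v = 1 by rewrite betaZr mulVf.
have bvu : beta G v u = -1 by rewrite beta_skew // buv.
clearbody v.
pose K := kermx (G *m (u + v)%MS^T).
have inK0 : forall x, (x <= K)%MS = orth G x (u + v)%MS.
  by move=> x; rewrite sub_kermx mulmxA.
have inK : forall x, (x <= K)%MS = (beta G x u == 0) && (beta G x v == 0).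
  move=> x; rewrite inK0; apply/idP/andP => [H|[H1 H2]].
    by rewrite -!orth1; split; apply: orth_sub H _; [apply: addsmxSl|apply: addsmxSr].
  by apply: orth_adds; rewrite orth1.
pose W' := (W :&: K)%MS.
have sWW : (W <= W' + (u + v))%MS.
  apply/row_subP => r; set x := row r W.
  set y := beta G x v *: u - beta G x u *: v.
  have yuv : (y <= u + v)%MS.
    rewrite /y -scaleNr; apply: addmx_sub; apply: scalemx_sub;
      [apply: addsmxSl | apply: addsmxSr].
  have yW : (y <= W)%MS.
    rewrite /y -scaleNr; apply: addmx_sub; apply: scalemx_sub => //.
  have xyW : (x - y <= W')%MS.
    rewrite sub_capmx; apply/andP; split.
      apply: addmx_sub; first exact: row_sub.
      by rewrite -scaleN1r; apply: scalemx_sub.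
    rewrite inK /y !betaDl !betaNl !betaDl !betaNl !betaZl !alt bvu buv.
    by apply/andP; split; apply/eqP; ring.
  by rewrite -(subrK y x); apply: addmx_sub_adds.
have W'W : (W' <= W)%MS by apply: capmxSl.
exists W'; split => //.
- have eqW : (W == W' + (u + v))%MS.
    by apply/andP; split => //; rewrite addsmx_sub W'W addsmx_sub uW vW.
  rewrite (eqmx_rank eqW) mxrank_disjoint_sum.
    have un0 : u != 0 by apply/eqP => u0; move: buv; rewrite u0 beta0l => /eqP; rewrite eq_sym oner_eq0.
    have nvu : ~~ (v <= u)%MS.
      apply/negP => /sub_rVP [k vk]; move: buv; rewrite vk betaZr alt mulr0 => /eqP.
      by rewrite eq_sym oner_eq0.
    by rewrite rank_add1 // rank_rV un0.
  apply/eqP; rewrite -submx0; apply/row_subP => r; rewrite submx0.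
  set y := row r _.
  have yW' : (y <= W')%MS by apply: submx_trans (row_sub _ _) (capmxSl _ _).
  have yuv : (y <= u + v)%MS by apply: submx_trans (row_sub _ _) (capmxSr _ _).
  move: yW'; rewrite sub_capmx inK => /andP [_ /andP [/eqP h1 /eqP h2]].
  case/sub_addsmxP: yuv => pq yE.
  move: h1 h2; rewrite yE (mx11_scalar pq.1) (mx11_scalar pq.2) !mul_scalar_mx.
  rewrite !betaDl !betaZl !alt bvu buv => h1 h2.
  have a0 : pq.1 0 0 = 0 by move: h2; rewrite mulr0 mulr1 addr0.
  have b0 : pq.2 0 0 = 0 by move: h1; rewrite mulr0 add0r mulrN1 => /eqP; rewrite oppr_eq0 => /eqP.
  by rewrite a0 b0 !scale0r addr0.
- move=> w wW' ow; apply: orth_sub sWW; apply: orth_adds => //.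
  by rewrite -inK0; apply: submx_trans wW' (capmxSr _ _).
Qed.

Lemma odd_rad (F : fieldType) (m : nat) (G : 'M[F]_m) :
  (forall x, beta G x x = 0) -> forall k (W : 'M[F]_m), \rank W = k.*2.+1 ->
  exists w : 'rV[F]_m, [/\ w != 0, (w <= W)%MS & orth G w W].
Proof.
move=> alt; elim => [|k IH] W rW; (case: (boolP (W *m G *m W^T == 0)) => HW;
  [ have: ~~ (W <= (0 : 'M_m))%MS by rewrite submx0 -mxrank_eq0 rW
  | ]).
- case/row_subPn => i Hi; exists (row i W); split; first by rewrite -submx0.
    exact: row_sub.
  by rewrite /orth -!row_mul (eqP HW) row0.
- case: (step_lemma alt HW) => W' [_ rW' _]; move: rW'; rewrite rW; lia.
- case/row_subPn => i Hi; exists (row i W); split; first by rewrite -submx0.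
    exact: row_sub.
  by rewrite /orth -!row_mul (eqP HW) row0.
- case: (step_lemma alt HW) => W' [W'W rW' comb].
  have rW'' : \rank W' = k.*2.+1 by move: rW'; rewrite rW doubleS; lia.
  case: (IH W' rW'') => w [wn0 wW' ow]; exists w; split => //.
    exact: submx_trans wW' W'W.
  exact: comb.
Qed.

Lemma row_rows3 (F : fieldType) (m : nat) (a b x : 'rV[F]_m) r :
  row r (rows3 a b x) = if val r == 0%N then a else if val r == 1%N then b else x.
Proof. apply/rowP => j; rewrite mxE [in LHS]mxE; by case: (val r == 0%N); case: (val r == 1%N). Qed.

Lemma rows3E (F : fieldType) (m : nat) (a b x : 'rV[F]_m) :
  (rows3 a b x == a + b + x)%MS.
Proof.
apply/andP; split.
  apply/row_subP => r; rewrite row_rows3.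
  case: ifP => _; first by apply: submx_trans (addsmxSl a b) (addsmxSl _ x).
  case: ifP => _; first by apply: submx_trans (addsmxSr a b) (addsmxSl _ x).
  exact: addsmxSr.
rewrite !addsmx_sub; apply/andP; split; first (apply/andP; split).
- by apply: (@eq_row_sub _ _ _ _ _ (@Ordinal 3 0 isT)); rewrite row_rows3.
- by apply: (@eq_row_sub _ _ _ _ _ (@Ordinal 3 1 isT)); rewrite row_rows3.
- by apply: (@eq_row_sub _ _ _ _ _ (@Ordinal 3 2 isT)); rewrite row_rows3.
Qed.

Lemma incomplex_iff (F : fieldType) (m : nat) (c : 'I_m -> 'I_m -> 'I_m -> F)
  (a b x : 'rV[F]_m) (P : 'M[F]_m) :
  \rank (a + b + x)%MS = 3%N -> (P == a + b + x)%MS ->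
  (in_complex c P <-> tri c a b x = 0).
Proof.
move=> r3 hP.
set R := rows3 a b x.
have RE := rows3E a b x.
have rR : \rank R = 3%N by rewrite (eqmx_rank RE).
have RP : (R <= P)%MS /\ (P <= R)%MS.
  case/andP: RE => h1 h2; case/andP: hP => h3 h4.
  by split; [apply: submx_trans h1 h4 | apply: submx_trans h3 h2].
split.
  case=> _ [A [AP fA O0]].
  change (Omega c A = 0) in O0.
  have AR : (A <= R)%MS by case/andP: AP => h _; apply: submx_trans h RP.2.
  have AE := mulmxKpV AR.
  set M := A *m pinvmx R in AE.
  rewrite -AE OmegaM in O0.
  have rA : \rank A = 3%N by apply/eqP.
  have rM : row_free M.
    rewrite /row_free eqn_leq rank_leq_row /= -{1}rA -AE; exact: mxrankM_maxl.
  move: rM; rewrite row_free_unit unitmxE unitfE => dM.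
  by move/eqP: O0; rewrite mulf_eq0 (negPf dM) /= => /eqP.
move=> t0; split; first by rewrite (eqmx_rank hP).
exists R; split => //.
- by apply/andP; split; [exact: RP.1 | exact: RP.2].
- by rewrite /row_free rR.
Qed.

Lemma mx1_eq0 (F : fieldType) (A : 'M[F]_1) : (A == 0) = (A 0 0 == 0).
Proof.
apply/eqP/eqP => [->|H]; first by rewrite mxE.
by apply/matrixP => i j; rewrite !ord1 H mxE.
Qed.

Lemma triB (F : fieldType) (m : nat) (c : 'I_m -> 'I_m -> 'I_m -> F) a y x :
  tri c a y x = beta (Gm c a) y x.
Proof. exact: triG. Qed.

Lemma altG (F : fieldType) (m : nat) (c : 'I_m -> 'I_m -> 'I_m -> F) a :
  forall x, beta (Gm c a) x x = 0.
Proof. by move=> x; rewrite -triB tri_xx. Qed.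

Lemma tri_skew (F : fieldType) (m : nat) (c : 'I_m -> 'I_m -> 'I_m -> F) a y x :
  tri c a y x = - tri c a x y.
Proof. by rewrite !triB beta_skew //; apply: altG. Qed.

Lemma triT (F : fieldType) (m : nat) (c : 'I_m -> 'I_m -> 'I_m -> F) a b x :
  tri c a b x = (x *m (b *m Gm c a)^T) 0 0.
Proof. by rewrite triB /beta -[in LHS](trmxK (b *m _ *m _)) trmx_mul trmxK mxE. Qed.

Lemma tri_span (F : fieldType) (m : nat) (c : 'I_m -> 'I_m -> 'I_m -> F) a b y :
  (y <= a + b)%MS -> tri c a b y = 0.
Proof.
case/sub_addsmxP => pq ->.
rewrite (mx11_scalar pq.1) (mx11_scalar pq.2) !mul_scalar_mx triDr !triZr.
by rewrite tri_xx tri_skew tri_aa oppr0 !mulr0 addr0.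
Qed.

Lemma exists_out (F : fieldType) (m p q : nat) (L : 'M[F]_(p, m)) (P : 'M[F]_(q, m)) :
  (\rank L < \rank P)%N -> exists x : 'rV[F]_m, (x <= P)%MS /\ ~~ (x <= L)%MS.
Proof.
move=> h; have nPL : ~~ (P <= L)%MS by apply/negP => /mxrankS; rewrite leqNgt h.
by case/row_subPn: nPL => i Hi; exists (row i P); split; [exact: row_sub | exact: Hi].
Qed.

Lemma eq_by_rank (F : fieldType) (m p q : nat) (A : 'M[F]_(p, m)) (B : 'M[F]_(q, m)) :
  (A <= B)%MS -> \rank A = \rank B -> (B <= A)%MS.
Proof. by move=> h r; rewrite -(mxrank_leqif_sup h).2 r. Qed.

Lemma nonzero_row (F : fieldType) (m : nat) (p : 'M[F]_m) :
  (0 < \rank p)%N -> exists a : 'rV[F]_m, a != 0 /\ (a <= p)%MS.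
Proof.
move=> h; have h0 : (\rank (0%R : 'M[F]_m) < \rank p)%N by rewrite mxrank0.
have [a [ap an]] := exists_out h0.
by exists a; split => //; rewrite -submx0.
Qed.

Lemma line_basis (F : fieldType) (m : nat) (l : 'M[F]_m) (a : 'rV[F]_m) :
  \rank l = 2%N -> a != 0 -> (a <= l)%MS ->
  exists b : 'rV[F]_m, [/\ ~~ (b <= a)%MS, (l <= a + b)%MS & (a + b <= l)%MS].
Proof.
move=> rl an al.
have h0 : (\rank a < \rank l)%N by rewrite rl rank_rV an.
have [b [bl nba]] := exists_out h0.
have abl : (a + b <= l)%MS by rewrite addsmx_sub al.
exists b; split => //; apply: eq_by_rank abl _.
by rewrite rank_add1 // rank_rV an rl.
Qed.

Lemma FL (F : fieldType) (m : nat) (u v : 'rV[F]_m) : u != 0 ->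
  (forall x : 'rV[F]_m, x *m u^T == 0 -> x *m v^T == 0) -> (v <= u)%MS.
Proof.
move=> un h; apply/negPn/negP => nvu.
pose M := row_mx u^T v^T.
have rM : \rank M = 2%N.
  rewrite -mxrank_tr /M tr_row_mx !trmxK -addsmxE ?rank_add1 ?rank_rV ?un //.
have rK : (\rank (kermx M) < \rank (kermx u^T))%N.
  rewrite !mxrank_ker rM mxrank_tr rank_rV un /=.
  have := rank_leq_col (u + v)%MS; rewrite rank_add1 // rank_rV un /=; lia.
have [x [xK xn]] := exists_out rK.
move: xK; rewrite sub_kermx => xu; have xv := h x xu.
by move: xn; rewrite sub_kermx /M mul_mx_row (eqP xu) (eqP xv) row_mx0 eqxx.
Qed.

Lemma F1 (F : fieldType) (m : nat) (c : 'I_m -> 'I_m -> 'I_m -> F) :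
  (forall l : 'M[F]_m, ~ singular_line c l) ->
  forall a b : 'rV[F]_m, a != 0 -> ~~ (b <= a)%MS -> exists x, tri c a b x != 0.
Proof.
move=> nosing a b an nba; apply: NNPP => H.
have rab : \rank (a + b)%MS = 2%N by rewrite rank_add1 // rank_rV an.
apply: (nosing (a + b)%MS); split => // P rP lP.
have h0 : (\rank (a + b)%MS < \rank P)%N by rewrite rab rP.
have [x [xP xn]] := exists_out h0.
have r3 : \rank (a + b + x)%MS = 3%N by rewrite rank_add1 // rab.
have sP : (a + b + x <= P)%MS by rewrite addsmx_sub lP xP.
have Pe : (P == a + b + x)%MS.
  by apply/andP; split => //; apply: eq_by_rank sP _; rewrite r3 rP.
apply/(incomplex_iff c r3 Pe).
by case: (eqVneq (tri c a b x) 0) => // hx; exfalso; apply: H; exists x.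
Qed.

Lemma kerG (F : fieldType) (m : nat) (c : 'I_m -> 'I_m -> 'I_m -> F) :
  (forall l : 'M[F]_m, ~ singular_line c l) ->
  forall a y : 'rV[F]_m, a != 0 -> y *m Gm c a = 0 -> (y <= a)%MS.
Proof.
move=> nosing a y an yG; case: (boolP (y <= a)%MS) => // nya.
case: (F1 nosing an nya) => x.
by rewrite triB /beta yG mul0mx mxE eqxx.
Qed.

Lemma polar_iff (F : fieldType) (m : nat) (c : 'I_m -> 'I_m -> 'I_m -> F)
  (a b : 'rV[F]_m) (l E : 'M[F]_m) :
  (3 < m)%N -> \rank (a + b)%MS = 2%N -> (l <= a + b)%MS -> (a + b <= l)%MS ->
  \rank E = m.-1 ->
  (is_polar c l E <-> forall x, (x <= E)%MS = (tri c a b x == 0)).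
Proof.
move=> m3 rab lab abl rE; split.
  case=> _ hP.
  have [x0 [x0t x0n]] : exists x, tri c a b x = 0 /\ ~~ (x <= a + b)%MS.
    pose K := kermx ((b *m Gm c a)^T).
    have hK : (\rank (a + b)%MS < \rank K)%N.
      rewrite /K mxrank_ker rab; have := rank_leq_col ((b *m Gm c a)^T); lia.
    have [x [xK xn]] := exists_out hK.
    exists x; split => //; apply/eqP; rewrite triT -mx1_eq0 -sub_kermx; exact: xK.
  have r3 : \rank (a + b + x0)%MS = 3%N by rewrite rank_add1 // rab.
  have e3 : (a + b + x0 == a + b + x0)%MS by apply/andP; split.
  have abE : (a + b <= E)%MS.
    have := (hP _ r3 (submx_trans lab (addsmxSl _ _))).1 (proj2 (incomplex_iff c r3 e3) x0t).
    by rewrite addsmx_sub => /andP [].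
  move=> x; case: (boolP (x <= a + b)%MS) => hx.
    by rewrite (submx_trans hx abE) (tri_span c hx) eqxx.
  have r3x : \rank (a + b + x)%MS = 3%N by rewrite rank_add1 // rab.
  have e3x : (a + b + x == a + b + x)%MS by apply/andP; split.
  have := hP _ r3x (submx_trans lab (addsmxSl _ _)).
  rewrite (incomplex_iff c r3x e3x) addsmx_sub abE /= => [[h1 h2]].
  by apply/idP/eqP => [/h2|/h1].
move=> hx; split => // P rP lP.
have abP : (a + b <= P)%MS by apply: submx_trans abl lP.
have h0 : (\rank (a + b)%MS < \rank P)%N by rewrite rab rP.
have [x [xP xn]] := exists_out h0.
have r3 : \rank (a + b + x)%MS = 3%N by rewrite rank_add1 // rab.
have sP : (a + b + x <= P)%MS by rewrite addsmx_sub abP xP.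
have PS : (P <= a + b + x)%MS by apply: eq_by_rank sP _; rewrite r3 rP.
have Pe : (P == a + b + x)%MS by apply/andP; split.
rewrite (incomplex_iff c r3 Pe); split => [t0|PE].
  apply: submx_trans PS _.
  rewrite !addsmx_sub !hx t0 (tri_span c (addsmxSl a b)) (tri_span c (addsmxSr a b)).
  by rewrite eqxx.
by apply/eqP; rewrite -hx; apply: submx_trans xP PE.
Qed.

Lemma delta_tr (F : fieldType) (m : nat) (u : 'rV[F]_m) j :
  ((delta_mx 0 j : 'rV[F]_m) *m u^T) 0 0 = u 0 j.
Proof. by rewrite -rowE !mxE. Qed.

Theorem proposition6p5 (F : fieldType) (n : nat)
  (c : 'I_n.+1 -> 'I_n.+1 -> 'I_n.+1 -> F) :
  (3 <= n)%N ->
  complex_coeff c ->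
  (forall l : 'M[F]_n.+1, ~ singular_line c l) ->
  ~~ odd n /\
  (forall H : 'M[F]_n.+1, \rank H = n ->
     line_spread (fun l => \rank l = 2%N /\ is_polar c l H) H).
Proof.
move=> n3 _ nosing.
have m3 : (3 < n.+1)%N by [].
split.
  apply/negP => on.
  pose a : 'rV[F]_n.+1 := delta_mx 0 ord0.
  have an : a != 0 by rewrite -mxrank_eq0 mxrank_delta.
  have rC : \rank a^C = (n./2).*2.+1.
    rewrite mxrank_compl /a mxrank_delta subn1 /=.
    by rewrite -{1}(odd_double_half n) on.
  have [w [wn wC ow]] := odd_rad (altG c a) rC.
  have owa : orth (Gm c a) w a by rewrite orth1 -triB tri_skew tri_aa oppr0.
  have ow1 : orth (Gm c a) w 1%:M.
    apply: orth_sub (orth_adds owa ow) _; rewrite sub1mx; exact: addsmx_compl_full.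
  have wG : w *m Gm c a = 0 by move: ow1; rewrite /orth trmx1 mulmx1 => /eqP.
  have wa := kerG nosing an wG.
  have : (w <= a :&: a^C)%MS by rewrite sub_capmx wa wC.
  by rewrite capmx_compl submx0 (negPf wn).
move=> H rH; split.
- move=> l /= [rl pol]; split => //.
  have rl0 : (0 < \rank l)%N by rewrite rl.
  have [a [an al]] := nonzero_row rl0.
  have [b [nba lab abl]] := line_basis rl an al.
  have rab : \rank (a + b)%MS = 2%N by rewrite rank_add1 // rank_rV an.
  have hx := (polar_iff c m3 rab lab abl rH).1 pol.
  apply: submx_trans lab _.
  rewrite addsmx_sub !hx (tri_span c (addsmxSl a b)) (tri_span c (addsmxSr a b)).
  by rewrite eqxx.
- move=> p rp pH.
  have rp0 : (0 < \rank p)%N by rewrite rp.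
  have [a [an ap]] := nonzero_row rp0.
  have pa : (p <= a)%MS by apply: eq_by_rank ap _; rewrite rank_rV an rp.
  have aH : (a <= H)%MS by apply: submx_trans ap pH.
  have hK : (\rank (0%R : 'M[F]_n.+1) < \rank (kermx H^T))%N.
    by rewrite mxrank0 mxrank_ker mxrank_tr rH subSnn.
  have [h0 [h0K h0n]] := exists_out hK.
  rewrite submx0 in h0n.
  have Hh : forall x : 'rV[F]_n.+1, (x <= H)%MS = (x *m h0^T == 0).
    have HK : (H <= kermx h0^T)%MS.
      rewrite sub_kermx -[H *m _]trmxK trmx_mul trmxK.
      by move: h0K; rewrite sub_kermx => /eqP ->; rewrite trmx0.
    have rK : \rank (kermx h0^T) = n by rewrite mxrank_ker mxrank_tr rank_rV h0n subn1.
    have KH : (kermx h0^T <= H)%MS by apply: eq_by_rank HK _; rewrite rK rH.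
    move=> x; rewrite -sub_kermx; apply/idP/idP => hx; [exact: submx_trans hx HK | exact: submx_trans hx KH].
  set G := Gm c a.
  have GK : (G <= kermx a^T)%MS.
    rewrite sub_kermx; apply/eqP/matrixP => i j.
    by rewrite -[G]mul1mx beta_entry row_id -triB tri_skew tri_aa oppr0 mxE.
  have kG : (kermx G <= a)%MS.
    apply/row_subP => i; apply: (kerG nosing an).
    by rewrite -row_mul mulmx_ker row0.
  have rG : \rank G = n.
    have h1 := mxrank_ker G; have h2 := mxrankS kG; have h3 := mxrankS GK.
    move: h1 h2 h3; rewrite !mxrank_ker mxrank_tr !rank_rV an /=; have := rank_leq_row G; lia.
  have KG : (kermx a^T <= G)%MS.
    by apply: eq_by_rank GK _; rewrite rG mxrank_ker mxrank_tr rank_rV an subn1.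
  have h0a : (h0 <= kermx a^T)%MS.
    rewrite sub_kermx -[h0 *m _]trmxK trmx_mul trmxK.
    by move: aH; rewrite Hh => /eqP ->; rewrite trmx0.
  have [b bE] := submxP (submx_trans h0a KG).
  have tb : forall x, tri c a b x = (x *m h0^T) 0 0 by move=> x; rewrite triT bE.
  have nba : ~~ (b <= a)%MS.
    apply/negP => /sub_rVP [k bk].
    move/negP: h0n; apply; apply/eqP/rowP => j.
    by rewrite mxE -delta_tr -tb bk triZm tri_aa mulr0.
  have rab : \rank (a + b)%MS = 2%N by rewrite rank_add1 // rank_rV an.
  exists (a + b)%MS; split; last by apply: submx_trans pa (addsmxSl a b).
  split => //.
  apply: (polar_iff c m3 rab (submx_refl _) (submx_refl _) rH).2 => x.
  by rewrite Hh tb mx1_eq0.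
- move=> p l1 l2 rp [rl1 pol1] [rl2 pol2] pl1 pl2.
  have rp0 : (0 < \rank p)%N by rewrite rp.
  have [a [an ap]] := nonzero_row rp0.
  have al1 := submx_trans ap pl1; have al2 := submx_trans ap pl2.
  have [b1 [nb1 l1ab ab1l]] := line_basis rl1 an al1.
  have [b2 [nb2 l2ab ab2l]] := line_basis rl2 an al2.
  have rab1 : \rank (a + b1)%MS = 2%N by rewrite rank_add1 // rank_rV an.
  have rab2 : \rank (a + b2)%MS = 2%N by rewrite rank_add1 // rank_rV an.
  have hx1 := (polar_iff c m3 rab1 l1ab ab1l rH).1 pol1.
  have hx2 := (polar_iff c m3 rab2 l2ab ab2l rH).1 pol2.
  have un : b1 *m Gm c a != 0.
    apply/negP => /eqP u0; case: (F1 nosing an nb1) => x.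
    by rewrite triT u0 trmx0 mulmx0 mxE eqxx.
  have vu : (b2 *m Gm c a <= b1 *m Gm c a)%MS.
    apply: (FL (v := b2 *m Gm c a) un) => x.
    by rewrite !mx1_eq0 -!triT -hx1 hx2.
  case/sub_rVP: vu => k vk.
  have d : (b2 - k *: b1) *m Gm c a = 0 by rewrite mulmxBl -scalemxAl vk subrr.
  have da := kerG nosing an d.
  have b2ab1 : (b2 <= a + b1)%MS.
    rewrite -(subrK (k *: b1) b2); apply: addmx_sub_adds => //.
    exact: scalemx_sub (submx_refl b1).
  have e : (a + b2 <= a + b1)%MS by rewrite addsmx_sub addsmxSl b2ab1.
  have e' : (a + b1 <= a + b2)%MS by apply: eq_by_rank e _; rewrite rab1 rab2.
  apply/andP; split.
    exact: submx_trans l1ab (submx_trans e' ab2l).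
  exact: submx_trans l2ab (submx_trans e ab1l).
Qed.
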